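(* Let $T$, $S$, $A$ be closed Hermitian subspaces in $X^2$ with $D(T)=D(S)=:D\subset D(A)$ and $T=S+A$. Suppose that $T(0)^\perp$ reduces both $S$ and $A$. Then $$T_sx=S_sx+A_sx\quad\text{for all }x\in D,$$ and, setting $\hat S_s:=S\cap(T(0)^\perp)^2$ and $\hat A_s:=A\cap(T(0)^\perp)^2$, one has $$\hat S_s=S_s,\qquad \hat A_s\subset A_s,$$ and $\hat A_s$ is a closed Hermitian operator in $T(0)^\perp$ with $D\subset D(\hat A_s)$.
   Context: $X$ is a complex Hilbert space and $X^2=X\times X$ carries the inner product $\langle (x,f),(y,g)\rangle=\langle x,y\rangle+\langle f,g\rangle$. A subspace $T$ in $X^2$ means a linear subspace of $X^2$ (a linear relation); a linear operator in $X$ is identified with its graph. Notation: $D(T)=\{x:(x,f)\in T \text{ for some } f\}$, $T(x)=\{f:(x,f)\in T\}$. The adjoint is $T^*=\{(y,g)\in X^2:\langle g,x\rangle=\langle y,f\rangle \text{ for all }(x,f)\in T\}$; $T$ is Hermitian if $T\subset T^*$. For subspaces $S,A$ in $X^2$, $S+A=\{(x,f+g):(x,f)\in S,(x,g)\in A\}$. For a closed subspace $T$, set $T_\infty=\{(0,g)\in X^2:(0,g)\in T\}$ and $T_s=T\ominus T_\infty$ (orthogonal complement of $T_\infty$ in $T$), so $T=T_s\oplus T_\infty$; $T_s$ is the graph of a linear operator (the operator part of $T$) with $D(T_s)=D(T)$ and $R(T_s)\subset T(0)^\perp$. Reducing subspace: if $X_1$ is a closed subspace of $X$ and $P$ the orthogonal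 projection of $X$ onto $X_1$, then $X_1$ reduces the subspace $T$ if $\{(Px,Pf):(x,f)\in T\}\subset T$. *)

(* Defs.v *)
From Stdlib Require Import Reals.
Open Scope R_scope.
Set Implicit Arguments.

Definition C : Type := (R * R)%type.
Definition C0 : C := (0, 0).
Definition C1 : C := (1, 0).
Definition Cadd (a b : C) : C := (fst a + fst b, snd a + snd b).
Definition Cmul (a b : C) : C :=
  (fst a * fst b - snd a * snd b, fst a * snd b + snd a * fst b).
Definition Cconj (a : C) : C := (fst a, - snd a).

Record CHilbert := {
  hs :> Type;
  hadd : hs -> hs -> hs;
  hzero : hs;
  hopp : hs -> hs;
  hscal : C -> hs -> hs;
  hip : hs -> hs -> C;
  hadd_assoc : forall x y z, hadd x (hadd y z) = hadd (hadd x y) z;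
  hadd_comm : forall x y, hadd x y = hadd y x;
  hadd_0 : forall x, hadd x hzero = x;
  hadd_opp : forall x, hadd x (hopp x) = hzero;
  hscal_assoc : forall a b x, hscal a (hscal b x) = hscal (Cmul a b) x;
  hscal_1 : forall x, hscal C1 x = x;
  hscal_distr_v : forall a x y, hscal a (hadd x y) = hadd (hscal a x) (hscal a y);
  hscal_distr_c : forall a b x, hscal (Cadd a b) x = hadd (hscal a x) (hscal b x);
  hip_add_l : forall x y z, hip (hadd x y) z = Cadd (hip x z) (hip y z);
  hip_scal_l : forall a x y, hip (hscal a x) y = Cmul a (hip x y);
  hip_conj : forall x y, hip y x = Cconj (hip x y);
  hip_pos : forall x, 0 <= fst (hip x x);
  hip_def : forall x, hip x x = C0 -> x = hzero;
  hcomplete : forall u : nat -> hs,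
    (forall eps, 0 < eps -> exists N, forall m n, (N <= m)%nat -> (N <= n)%nat ->
       sqrt (fst (hip (hadd (u m) (hopp (u n))) (hadd (u m) (hopp (u n))))) < eps) ->
    exists l, forall eps, 0 < eps -> exists N, forall n, (N <= n)%nat ->
       sqrt (fst (hip (hadd (u n) (hopp l)) (hadd (u n) (hopp l)))) < eps
}.

Arguments hadd {c}. Arguments hzero {c}. Arguments hopp {c}.
Arguments hscal {c}. Arguments hip {c}.

Section Rel.
Context {X : CHilbert}.

Definition hsub (x y : X) : X := hadd x (hopp y).
Definition nrm2 (x : X) : R := fst (hip x x).

Definition subspace (M : X -> Prop) : Prop :=
  M hzero /\ (forall x y, M x -> M y -> M (hadd x y)) /\
  (forall a x, M x -> M (hscal a x)).

Definition converges (u : nat -> X) (l : X) : Prop :=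
  forall eps, 0 < eps -> exists N, forall n, (N <= n)%nat -> sqrt (nrm2 (hsub (u n) l)) < eps.

Definition closed_subspace (M : X -> Prop) : Prop :=
  subspace M /\ forall u l, (forall n, M (u n)) -> converges u l -> M l.

Definition perp (M : X -> Prop) : X -> Prop :=
  fun y => forall z, M z -> hip z y = C0.

Definition is_orth_proj (M : X -> Prop) (P : X -> X) : Prop :=
  forall x, M (P x) /\ perp M (hsub x (P x)).

(** Subspaces of X^2 (linear relations): T x f means (x,f) in T. *)
Definition rel (Y : CHilbert) := Y -> Y -> Prop.

Definition ip2 (x f y g : X) : C := Cadd (hip x y) (hip f g).

Definition subspace2 (T : rel X) : Prop :=
  T hzero hzero /\
  (forall x f y g, T x f -> T y g -> T (hadd x y) (hadd f g)) /\
  (forall a x f, T x f -> T (hscal a x) (hscal a f)).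

Definition converges2 (u v : nat -> X) (x f : X) : Prop :=
  forall eps, 0 < eps -> exists N, forall n, (N <= n)%nat ->
    sqrt (nrm2 (hsub (u n) x) + nrm2 (hsub (v n) f)) < eps.

Definition closed2 (T : rel X) : Prop :=
  subspace2 T /\
  forall u v x f, (forall n, T (u n) (v n)) -> converges2 u v x f -> T x f.

Definition dom (T : rel X) : X -> Prop := fun x => exists f, T x f.
Definition at0 (T : rel X) : X -> Prop := fun f => T hzero f.

Definition adjoint (T : rel X) : rel X :=
  fun y g => forall x f, T x f -> hip g x = hip y f.

Definition hermitian (T : rel X) : Prop := forall y g, T y g -> adjoint T y g.

Definition rel_sum (S A : rel X) : rel X :=
  fun x h => exists f g, S x f /\ A x g /\ h = hadd f g.

(** T_infty and T_s = T (-) T_infty *)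
Definition Tinf (T : rel X) : rel X := fun x g => x = hzero /\ T x g.
Definition Tsop (T : rel X) : rel X :=
  fun x f => T x f /\ forall y g, Tinf T y g -> ip2 x f y g = C0.

Definition reduces (X1 : X -> Prop) (T : rel X) : Prop :=
  closed_subspace X1 /\
  forall P, is_orth_proj X1 P -> forall x f, T x f -> T (P x) (P f).

Definition restr2 (T : rel X) (M : X -> Prop) : rel X := fun x f => T x f /\ M x /\ M f.

Definition is_operator (T : rel X) : Prop := forall x f g, T x f -> T x g -> f = g.

End Rel.

(* Main.v *)
Require Import Defs.
From Stdlib Require Import Reals Lra Psatz ClassicalEpsilon Classical Lia.
Open Scope R_scope.

Notation re u v := (fst (hip u v)).
Notation im u v := (snd (hip u v)).
Definition m1 : Defs.C := (-1, 0).
Section H.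
Context {X : CHilbert}.


Lemma hip_0l (v : X) : hip hzero v = Defs.C0.
Proof.
  pose proof (hip_add_l X hzero hzero v) as H. rewrite hadd_0 in H.
  destruct (hip hzero v) as [a b]. unfold Cadd in H; simpl in H.
  injection H; intros. unfold Defs.C0; f_equal; lra.
Qed.
Lemma hip_0r (v : X) : hip v hzero = Defs.C0.
Proof. rewrite (hip_conj X hzero v), hip_0l. unfold Cconj, Defs.C0; simpl; f_equal; ring. Qed.

Lemma re_0l (v : X) : re hzero v = 0. Proof. rewrite hip_0l; reflexivity. Qed.
Lemma re_0r (v : X) : re v hzero = 0. Proof. rewrite hip_0r; reflexivity. Qed.
Lemma re_sym (u v : X) : re u v = re v u.
Proof. rewrite (hip_conj X u v). unfold Cconj; simpl; reflexivity. Qed.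
Lemma re_addl (u v w : X) : re (hadd u v) w = re u w + re v w.
Proof. rewrite hip_add_l. unfold Cadd; simpl; reflexivity. Qed.
Lemma im_addl (u v w : X) : im (hadd u v) w = im u w + im v w.
Proof. rewrite hip_add_l. unfold Cadd; simpl; reflexivity. Qed.
Lemma re_addr (w u v : X) : re w (hadd u v) = re w u + re w v.
Proof. rewrite (hip_conj X (hadd u v) w), (hip_conj X u w), (hip_conj X v w), hip_add_l.
  unfold Cconj, Cadd; simpl; ring. Qed.
Lemma im_addr (w u v : X) : im w (hadd u v) = im w u + im w v.
Proof. rewrite (hip_conj X (hadd u v) w), (hip_conj X u w), (hip_conj X v w), hip_add_l.
  unfold Cconj, Cadd; simpl; ring. Qed.
Lemma re_oppl (u w : X) : re (hopp u) w = - re u w.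
Proof. pose proof (re_addl u (hopp u) w) as H. rewrite hadd_opp, re_0l in H. lra. Qed.
Lemma im_oppl (u w : X) : im (hopp u) w = - im u w.
Proof. pose proof (im_addl u (hopp u) w) as H. rewrite hadd_opp, hip_0l in H. simpl in H. lra. Qed.
Lemma re_oppr (w u : X) : re w (hopp u) = - re w u.
Proof. pose proof (re_addr w u (hopp u)) as H. rewrite hadd_opp, re_0r in H. lra. Qed.
Lemma im_oppr (w u : X) : im w (hopp u) = - im w u.
Proof. pose proof (im_addr w u (hopp u)) as H. rewrite hadd_opp, hip_0r in H. simpl in H. lra. Qed.
Lemma re_scalRl t (u w : X) : re (hscal (t, 0) u) w = t * re u w.
Proof. rewrite hip_scal_l. destruct (hip u w). unfold Cmul; simpl; ring. Qed.
Lemma re_scalRr t (w u : X) : re w (hscal (t, 0) u) = t * re w u.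
Proof. rewrite re_sym, re_scalRl, re_sym. reflexivity. Qed.
Lemma re_scalr a (w u : X) : re w (hscal a u) = fst a * re u w - snd a * im u w.
Proof. rewrite (hip_conj X (hscal a u) w), hip_scal_l. destruct a, (hip u w). unfold Cconj, Cmul; simpl; ring. Qed.

Lemma rez (a b : X) : hip a b = Defs.C0 -> re a b = 0.
Proof. intro H; rewrite H; reflexivity. Qed.

Lemma add_cancel_zero (y : X) : hadd y y = y -> y = hzero.
Proof. intro H.
  assert (H0 : hadd (hadd y y) (hopp y) = hadd y (hopp y)) by (rewrite H; reflexivity).
  rewrite <- hadd_assoc, hadd_opp, hadd_0 in H0. exact H0. Qed.

Lemma scal0 (x : X) : hscal Defs.C0 x = hzero.
Proof. apply add_cancel_zero. rewrite <- hscal_distr_c.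
  replace (Cadd Defs.C0 Defs.C0) with Defs.C0 by (unfold Cadd, Defs.C0; simpl; f_equal; ring). reflexivity. Qed.

Lemma neg_cancel (x : X) : hadd x (hscal m1 x) = hzero.
Proof. rewrite <- (hscal_1 X x) at 1. rewrite <- hscal_distr_c.
  replace (Cadd Defs.C1 m1) with Defs.C0 by (unfold Cadd, Defs.C0, Defs.C1, m1; simpl; f_equal; ring). apply scal0. Qed.

Lemma eq_of_n0 (a b : X) : re (hsub a b) (hsub a b) = 0 -> a = b.
Proof. intro H.
  assert (Hi : im (hsub a b) (hsub a b) = 0).
  { pose proof (hip_conj X (hsub a b) (hsub a b)) as Hc.
    destruct (hip (hsub a b) (hsub a b)); unfold Cconj in Hc; injection Hc; simpl; lra. }
  assert (H' : hadd a (hopp b) = hzero).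
  { apply (hip_def X). fold (hsub a b). destruct (hip (hsub a b) (hsub a b)); simpl in *; subst; reflexivity. }
  rewrite <- (hadd_0 X a), <- (hadd_opp X b), (hadd_comm X b), hadd_assoc, H', hadd_comm, hadd_0.
  reflexivity.
Qed.

Ltac expand := unfold nrm2, hsub, m1 in *;
  repeat (rewrite ?re_addl, ?re_addr, ?re_oppl, ?re_oppr, ?re_scalRl, ?re_scalRr, ?re_0l, ?re_0r in *).

Lemma sqrt_lt_of (y eps : R) : 0 <= y -> y < eps * eps -> 0 < eps -> sqrt y < eps.
Proof. intros. rewrite <- (sqrt_square eps) by lra. apply sqrt_lt_1_alt; lra. Qed.
Lemma lt_of_sqrt (y eps : R) : 0 <= y -> sqrt y < eps -> y < eps * eps.
Proof. intros. rewrite <- (sqrt_sqrt y) by lra. pose proof (sqrt_pos y). nra. Qed.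

Lemma ineq_e (x k p : X) e : 0 < e ->
  nrm2 (hsub x p) <= (1 + e) * nrm2 (hsub x k) + (1 + / e) * nrm2 (hsub k p).
Proof.
  intro He.
  set (a := hsub x k). set (b := hsub k p).
  assert (Hid : nrm2 (hsub x p) = re a a + 2 * re a b + re b b).
  { unfold a, b. expand. pose proof (re_sym x k). pose proof (re_sym x p). pose proof (re_sym k p). lra. }
  pose proof (hip_pos X (hadd (hscal (e, 0) a) (hopp b))) as Hp.
  repeat (rewrite ?re_addl, ?re_addr, ?re_oppl, ?re_oppr, ?re_scalRl, ?re_scalRr in Hp).
  rewrite (re_sym b a) in Hp.
  pose proof (hip_pos X a). pose proof (hip_pos X b).
  rewrite Hid. unfold nrm2. fold a b.
  assert (2 * re a b <= e * re a a + / e * re b b).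
  { apply (Rmult_le_reg_l e); auto. rewrite Rmult_plus_distr_l.
    replace (e * (/ e * re b b)) with (re b b) by (field; lra). nra. }
  nra.
Qed.

Lemma proj_exists (K : X -> Prop) : closed_subspace K ->
  forall x, exists p, K p /\ perp K (hsub x p).
Proof.
  intros [[K0 [Kadd Kscal]] Kcl] x.
  set (E := fun r => exists k, K k /\ r = - nrm2 (hsub x k)).
  assert (HEb : bound E).
  { exists 0. intros r [k [_ ->]]. pose proof (hip_pos X (hsub x k)). unfold nrm2. lra. }
  assert (HEn : exists r, E r). { exists (- nrm2 (hsub x hzero)). exists hzero. auto. }
  destruct (completeness E HEb HEn) as [m [Hub Hlub]].
  set (d := - m).
  assert (Hd0 : 0 <= d).
  { assert (m <= 0); [|unfold d; lra]. apply Hlub. intros r [k [_ ->]].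
    pose proof (hip_pos X (hsub x k)). unfold nrm2. lra. }
  assert (Hd1 : forall k, K k -> d <= nrm2 (hsub x k)).
  { intros k Hk. assert (H : E (- nrm2 (hsub x k))) by (exists k; auto).
    specialize (Hub _ H). unfold d. lra. }
  assert (Hd2 : forall eps, 0 < eps -> exists k, K k /\ nrm2 (hsub x k) < d + eps).
  { intros eps He. apply NNPP. intro Hn.
    assert (H : is_upper_bound E (m - eps)).
    { intros r [k [Hk ->]]. destruct (Rle_dec (- nrm2 (hsub x k)) (m - eps)) as [|Hr]; auto.
      exfalso; apply Hn. exists k. split; auto. unfold d. lra. }
    specialize (Hlub _ H). lra. }
  assert (Hs : forall n : nat, exists k, K k /\ nrm2 (hsub x k) < d + / INR (S n)).
  { intro n. apply Hd2. apply Rinv_0_lt_compat, lt_0_INR; lia. }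
  set (ks := fun n => proj1_sig (constructive_indefinite_description _ (Hs n))).
  assert (Hks : forall n, K (ks n) /\ nrm2 (hsub x (ks n)) < d + / INR (S n)).
  { intro n. unfold ks. destruct (constructive_indefinite_description _ (Hs n)); simpl; auto. }
  assert (Hc : forall i j, nrm2 (hsub (ks i) (ks j)) <= 2 * / INR (S i) + 2 * / INR (S j)).
  { intros i j. destruct (Hks i) as [Ki Hi]. destruct (Hks j) as [Kj Hj].
    assert (Km : K (hscal (/2, 0) (hadd (ks i) (ks j)))) by (apply Kscal, Kadd; auto).
    pose proof (Hd1 _ Km) as Hm.
    set (a := ks i) in *. set (b := ks j) in *.
    expand.
    pose proof (re_sym a b). pose proof (re_sym x a). pose proof (re_sym x b).
    lra. }
  assert (Hinv : forall N n, (0 < N)%nat -> (N <= n)%nat -> / INR (S n) <= / INR N).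
  { intros N n HN Hn. apply Rinv_le_contravar. apply lt_0_INR; auto. apply le_INR; lia. }
  assert (Hcauchy : forall eps, 0 < eps -> exists N, forall m n, (N <= m)%nat -> (N <= n)%nat ->
       sqrt (fst (hip (hadd (ks m) (hopp (ks n))) (hadd (ks m) (hopp (ks n))))) < eps).
  { intros eps He.
    destruct (archimed_cor1 (eps*eps/4)) as [N [HN HN0]]. { nra. }
    exists N. intros i j Hi Hj.
    pose proof (Hc i j). pose proof (Hinv N i HN0 Hi). pose proof (Hinv N j HN0 Hj).
    apply sqrt_lt_of; auto. apply (hip_pos X). unfold nrm2, hsub in *. lra. }
  destruct (hcomplete X ks Hcauchy) as [p Hp].
  assert (Kp : K p). { apply (Kcl ks p); [intro n; apply Hks | exact Hp]. }
  assert (Hpd : nrm2 (hsub x p) <= d).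
  { apply Rnot_lt_le. intro Hlt. set (g := nrm2 (hsub x p) - d).
    assert (Hg : 0 < g) by (unfold g; lra).
    set (e := Rmin 1 (g / (3 * (d + 1)))).
    assert (He0 : 0 < e). { unfold e. apply Rmin_glb_lt; [lra|]. apply Rdiv_lt_0_compat; lra. }
    assert (He1 : e <= 1) by apply Rmin_l.
    assert (He2 : e * (d + 1) <= g / 3).
    { assert (e <= g / (3 * (d + 1))) by apply Rmin_r.
      apply (Rmult_le_compat_r (d+1)) in H; [|lra].
      replace (g / (3 * (d + 1)) * (d + 1)) with (g/3) in H by (field; lra). lra. }
    destruct (archimed_cor1 (g/6)) as [N1 [HN1 HN10]]. { lra. }
    set (eps := Rmin 1 (g / (3 * (1 + / e)))).
    assert (Hie : 0 < / e) by (apply Rinv_0_lt_compat; lra).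
    assert (Heps : 0 < eps). { unfold eps. apply Rmin_glb_lt; [lra|]. apply Rdiv_lt_0_compat; lra. }
    destruct (Hp eps Heps) as [N2 HN2].
    set (n := Nat.max N1 N2).
    specialize (HN2 n ltac:(lia)).
    apply lt_of_sqrt in HN2; [|apply (hip_pos X)].
    assert (Heps2 : eps * eps <= g / (3 * (1 + / e))).
    { assert (eps <= 1) by apply Rmin_l. assert (eps <= g / (3 * (1 + / e))) by apply Rmin_r. nra. }
    assert (Hb : (1 + / e) * nrm2 (hsub (ks n) p) < g / 3).
    { unfold nrm2, hsub in *.
      apply Rlt_le_trans with ((1 + / e) * (g / (3 * (1 + / e)))).
      - apply Rmult_lt_compat_l; lra.
      - right; field; lra. }
    pose proof (ineq_e x (ks n) p e He0) as Hie2.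
    destruct (Hks n) as [_ Hkn].
    pose proof (Hinv N1 n HN10 ltac:(lia)).
    pose proof (hip_pos X (hsub x (ks n))).
    assert (Hx : (1 + e) * nrm2 (hsub x (ks n)) <= (1 + e) * (d + / INR (S n))).
    { apply Rmult_le_compat_l; lra. }
    assert (0 < / INR (S n)) by (apply Rinv_0_lt_compat, lt_0_INR; lia).
    assert (e * / INR (S n) <= / INR (S n)) by nra.
    unfold g in *. nra. }
  assert (Hvar : forall k, K k -> re x k = re p k).
  { intros k Kk.
    set (c := re x k - re p k). set (nk := re k k).
    assert (Hq : forall t, 0 <= - 2 * t * c + t * t * nk).
    { intro t. assert (H : K (hadd p (hscal (t, 0) k))) by auto.
      pose proof (Hd1 _ H) as H1.
      assert (Heq : nrm2 (hsub x (hadd p (hscal (t, 0) k))) = nrm2 (hsub x p) - 2*t*c + t*t*nk).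
      { unfold c, nk. expand. rewrite (re_sym k x), (re_sym k p), (re_sym p x). ring. }
      lra. }
    pose proof (hip_pos X k) as Hnk. fold nk in Hnk.
    set (s := / (nk + 1)).
    assert (Hs0 : 0 < s) by (apply Rinv_0_lt_compat; lra).
    assert (Hsn : s * nk <= 1).
    { unfold s. apply (Rmult_le_reg_l (nk + 1)); [lra|].
      replace ((nk + 1) * (/ (nk + 1) * nk)) with nk by (field; lra). lra. }
    specialize (Hq (s * c)).
    set (w := s * (c * c)).
    assert (Hw : 0 <= w) by (unfold w; apply Rmult_le_pos; [lra|apply Rle_0_sqr]).
    assert (Hq' : 0 <= -2 * w + (s * nk) * w) by (unfold w; nra).
    assert ((s * nk) * w <= w) by nra.
    assert (w = 0) by lra.
    assert (c * c = 0). { unfold w in H0. apply Rmult_integral in H0. destruct H0; [lra|auto]. }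
    assert (c = 0) by nra. unfold c in H2. lra. }
  exists p. split; auto. intros z Kz.
  rewrite (surjective_pairing (hip z (hsub x p))). unfold Defs.C0. f_equal.
  - unfold hsub. rewrite re_addr, re_oppr, (re_sym z x), (re_sym z p), (Hvar z Kz). ring.
  - unfold hsub. rewrite im_addr, im_oppr.
    pose proof (Hvar (hscal (0, 1) z) (Kscal _ _ Kz)) as H.
    rewrite !re_scalr in H. simpl in H. lra.
Qed.

Lemma proj_fun (K : X -> Prop) : closed_subspace K -> exists P, is_orth_proj K P.
Proof. intro HK.
  exists (fun x => proj1_sig (constructive_indefinite_description _ (proj_exists K HK x))).
  intro x. destruct (constructive_indefinite_description _ _); simpl; auto. Qed.

Lemma proj_unique (K : X -> Prop) u p q : K p -> perp K (hsub u p) -> K q -> perp K (hsub u q) -> p = q.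
Proof. intros Kp Hp Kq Hq. apply eq_of_n0.
  pose proof (rez _ _ (Hp p Kp)). pose proof (rez _ _ (Hp q Kq)).
  pose proof (rez _ _ (Hq p Kp)). pose proof (rez _ _ (Hq q Kq)).
  expand. pose proof (re_sym p q). lra. Qed.

End H.
Ltac expand := unfold nrm2, hsub, m1 in *;
  repeat (rewrite ?re_addl, ?re_addr, ?re_oppl, ?re_oppr, ?re_scalRl, ?re_scalRr, ?re_0l, ?re_0r in *).


Lemma conv2_split {X : CHilbert} (u v : nat -> X) x f :
  converges2 u v x f -> converges u x /\ converges v f.
Proof. intro H. pose proof (hip_pos X (hsub (u 0%nat) x)).
  split; intros eps He; destruct (H eps He) as [N HN]; exists N; intros n Hn;
  specialize (HN n Hn); eapply Rle_lt_trans; try exact HN; apply sqrt_le_1_alt;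
  pose proof (hip_pos X (hsub (u n) x)); pose proof (hip_pos X (hsub (v n) f)); unfold nrm2; lra.
Qed.

Theorem theorem3p3 (X : CHilbert) (T S A : rel X) :
  closed2 T -> closed2 S -> closed2 A ->
  hermitian T -> hermitian S -> hermitian A ->
  (forall x, dom T x <-> dom S x) ->
  (forall x, dom T x -> dom A x) ->
  (forall x h, T x h <-> rel_sum S A x h) ->
  reduces (perp (at0 T)) S ->
  reduces (perp (at0 T)) A ->
  (forall x, dom T x ->
     forall h, Tsop T x h <-> exists f g, Tsop S x f /\ Tsop A x g /\ h = hadd f g) /\
  (forall x f, restr2 S (perp (at0 T)) x f <-> Tsop S x f) /\
  (forall x f, restr2 A (perp (at0 T)) x f -> Tsop A x f) /\
  (closed2 (restr2 A (perp (at0 T))) /\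
   hermitian (restr2 A (perp (at0 T))) /\
   is_operator (restr2 A (perp (at0 T))) /\
   (forall x, dom T x -> dom (restr2 A (perp (at0 T))) x)).
Proof.
  intros HTc HSc HAc HTh HSh HAh HDS HDA HTsum [HMcl HredS] [_ HredA].
  set (M := perp (at0 T)) in *.
  destruct (proj_fun M HMcl) as [P HP].
  pose proof (HredS P HP) as RS. pose proof (HredA P HP) as RA.
  destruct HMcl as [[M0 [Madd Mscal]] Mclosed].
  destruct HSc as [HSsub Sclosed]. pose proof HSsub as [S00 [Sadd Sscal]].
  destruct HAc as [HAsub Aclosed]. pose proof HAsub as [A00 [Aadd Ascal]].
  assert (DM : forall x, dom T x -> M x).
  { intros x [f Hf] z Hz. unfold at0 in Hz. pose proof (HTh _ _ Hz x f Hf) as H.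
    rewrite H, hip_0l. reflexivity. }
  assert (S0T : forall a, S hzero a -> T hzero a).
  { intros a Ha. apply HTsum. exists a, hzero. repeat split; auto. rewrite hadd_0; reflexivity. }
  assert (A0T : forall a, A hzero a -> T hzero a).
  { intros a Ha. apply HTsum. exists hzero, a. repeat split; auto.
    rewrite hadd_comm, hadd_0; reflexivity. }
  assert (PM : forall x, M x -> P x = x).
  { intros x Hx. symmetry. apply (proj_unique M x x (P x)); auto; try apply HP.
    intros z _. unfold hsub. rewrite hadd_opp. apply hip_0r. }
  assert (TsM : forall (Y : rel X), (forall a, Y hzero a -> T hzero a) ->
             forall x f, Y x f -> M f -> Tsop Y x f).
  { intros Y HY x f Hf HMf. split; auto. intros y g [-> Hg]. unfold ip2. rewrite hip_0r.
    rewrite (hip_conj X g f), (HMf g (HY _ Hg)). unfold Cconj, Cadd, Defs.C0; simpl; f_equal; ring. }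
  assert (MTs : forall (Y : rel X), subspace2 Y -> (forall x f, Y x f -> Y (P x) (P f)) ->
             (forall a, Y hzero a -> T hzero a) -> forall x f, M x -> Tsop Y x f -> M f).
  { intros Y [_ [Yadd Yscal]] YP HY x f Mx [Hf Horth].
    assert (Hd : Y hzero (hadd f (hscal m1 (P f)))).
    { rewrite <- (neg_cancel x). apply Yadd; auto. apply Yscal.
      rewrite <- (PM x Mx) at 1. apply YP; auto. }
    set (dd := hadd f (hscal m1 (P f))) in *.
    pose proof (Horth hzero dd (conj eq_refl Hd)) as H1. unfold ip2 in H1. rewrite hip_0r in H1.
    assert (H2 : re f dd = 0). { apply (f_equal fst) in H1. simpl in H1. lra. }
    destruct (HP f) as [HPf HPo].
    assert (H3 : re dd (P f) = 0) by (apply rez; apply HPf; apply HY; auto).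
    assert (Hfe : f = P f).
    { apply eq_of_n0. unfold dd in H2, H3. expand. pose proof (re_sym f (P f)). lra. }
    rewrite Hfe; exact HPf. }
  split.
  { intros x Dx h. pose proof (DM x Dx) as Mx. split.
    - intros [Th Horth].
      assert (Mh : M h).
      { intros z Hz. pose proof (Horth hzero z (conj eq_refl Hz)) as H1. unfold ip2 in H1.
        rewrite hip_0r in H1. rewrite (hip_conj X h z).
        destruct (hip h z) as [a b]; unfold Cadd, Cconj, Defs.C0 in H1 |- *; simpl in H1 |- *.
        injection H1; intros; f_equal; lra. }
      apply HTsum in Th. destruct Th as [f [g [Hf [Hg ->]]]].
      exists (P f), (P g).
      assert (SPf : S x (P f)) by (rewrite <- (PM x Mx) at 1; apply RS; auto).
      assert (APg : A x (P g)) by (rewrite <- (PM x Mx) at 1; apply RA; auto).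
      destruct (HP f) as [MPf Of]. destruct (HP g) as [MPg Og].
      split; [apply TsM; auto|]. split; [apply TsM; auto|].
      apply eq_of_n0.
      pose proof (rez _ _ (Of _ MPf)). pose proof (rez _ _ (Of _ MPg)). pose proof (rez _ _ (Of _ Mh)).
      pose proof (rez _ _ (Og _ MPf)). pose proof (rez _ _ (Og _ MPg)). pose proof (rez _ _ (Og _ Mh)).
      expand.
      pose proof (re_sym f g). pose proof (re_sym f (P f)). pose proof (re_sym f (P g)).
      pose proof (re_sym g (P f)). pose proof (re_sym g (P g)). pose proof (re_sym (P f) (P g)).
      lra.
    - intros [f [g [Tf [Tg ->]]]].
      assert (Mf : M f) by (apply (MTs S HSsub RS S0T x f); auto).
      assert (Mg : M g) by (apply (MTs A HAsub RA A0T x g); auto).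
      apply (TsM T); auto.
      apply HTsum. exists f, g. destruct Tf, Tg. auto. }
  split.
  { intros x f. split.
    - intros [Hf [Mx Mf]]. apply TsM; auto.
    - intros Ts. pose proof Ts as [Hf _].
      assert (Mx : M x) by (apply DM, (proj2 (HDS x)); exists f; auto).
      split; auto. split; auto. apply (MTs S HSsub RS S0T x f); auto. }
  split.
  { intros x f [Hf [Mx Mf]]. apply TsM; auto. }
  split.
  { split.
    - split. { repeat split; auto. } split.
      + intros x f y g [? [? ?]] [? [? ?]]. repeat split; auto.
      + intros a x f [? [? ?]]. repeat split; auto.
    - intros u v x f Hn Hc. destruct (conv2_split _ _ _ _ Hc) as [Hu Hv].
      split; [apply (Aclosed u v x f); auto; intro n; apply Hn|].
      split; [apply (Mclosed u x) | apply (Mclosed v f)]; auto; intro n; apply Hn. }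
  split.
  { intros y g [Hyg _] x f [Hxf _]. exact (HAh _ _ Hyg x f Hxf). }
  split.
  { intros x f g [Hf [Mx Mf]] [Hg [_ Mg]].
    assert (Hd : A hzero (hadd f (hscal m1 g))) by (rewrite <- (neg_cancel x); apply Aadd; auto).
    pose proof (rez _ _ (Mf _ (A0T _ Hd))). pose proof (rez _ _ (Mg _ (A0T _ Hd))).
    apply eq_of_n0. expand. pose proof (re_sym f g). lra. }
  { intros x Dx. destruct (HDA x Dx) as [f Hf]. pose proof (DM x Dx) as Mx.
    exists (P f). split; [rewrite <- (PM x Mx) at 1; apply RA; auto | split; auto; apply HP]. }
Qed.
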